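(* Let $r\ge1$ and $D\ge3$ be integers, let $N:=\lfloor \frac{(D-1)r}{2}\rfloor$, $k:=\lfloor\frac{D-1}{2}\rfloor$, $\bar k:=\lceil\frac{D-1}{2}\rceil$. Let $\alpha_1<\cdots<\alpha_{r(D-1)}$ be integers with $\alpha_1\ge2$ such that $\alpha_t$ is odd for $1\le t\le N$ and $\alpha_t$ is even for $N+1\le t\le r(D-1)$. Then there is a nonzero constant $C$ such that $\tilde\Delta_{r,D}(\underline{\alpha})=C\,\tilde\Delta'_{r,D}(\underline{\alpha})\,\tilde\Delta''_{r,D}(\underline{\alpha})$. In particular, if $\tilde\Delta'_{r,D}(\underline{\alpha})\ne0$ and $\tilde\Delta''_{r,D}(\underline{\alpha})\ne0$, then $\tilde\Delta_{r,D}(\underline{\alpha})\ne0$.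
   Context: $B_n(x)$ is the Bernoulli polynomial, $\frac{ze^{xz}}{e^z-1}=\sum_{n\ge0}B_n(x)\frac{z^n}{n!}$, $B_n=B_n(0)$, and $\tilde B_n(x):=D^n(B_n(x)-B_n)$. $\tilde\Delta_{r,D}(\underline{\alpha})$ is the determinant of the $r(D-1)\times r(D-1)$ matrix whose entry in row $t$ ($1\le t\le r(D-1)$) and column $m(D-1)+v$ ($0\le m\le r-1$, $1\le v\le D-1$) is $\frac{\tilde B_{\alpha_t+m}(v/D)}{\alpha_t+m}$. $\tilde\Delta'_{r,D}(\underline{\alpha})$ is the determinant of the $N\times N$ matrix with rows indexed by $t=1,\ldots,N$ and columns indexed by the pairs $(m,v)$ with $0\le m\le r-1$ and $1\le v\le k$ if $m$ is even, $1\le v\le\bar k$ if $m$ is odd (ordered by $m$, then by $v$), with entry $\frac{\tilde B_{\alpha_t+m}(v/D)}{\alpha_t+m}$. $\tilde\Delta''_{r,D}(\underline{\alpha})$ is the determinant of the square matrix with rows indexed by $t=N+1,\ldots,r(D-1)$ and columns indexed by the pairs $(m,v)$ with $0\le m\le r-1$ and $1\le v\le\bar k$ if $m$ is even, $1\le v\le k$ if $m$ is odd (ordered by $m$, then by $v$), with entry $\frac{\tilde B_{\alpha_t+m}(v/D)}{\alpha_t+m}$. *)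

(* Defs.v *)
From mathcomp Require Import all_boot all_order all_algebra.
Set Implicit Arguments.
Unset Strict Implicit.
Unset Printing Implicit Defensive.
Import Order.TTheory GRing.Theory Num.Theory.
Local Open Scope ring_scope.

(* [bern_seq n] = [:: B_0; ...; B_n], Bernoulli numbers, via the recursion
   sum_(k <= m) C(m+1,k) B_k = 0 (m >= 1), B_0 = 1, which is the coefficient
   identity of  z = (e^z - 1) * sum_n B_n z^n / n!.  (B_1 = -1/2.) *)
Fixpoint bern_seq (n : nat) : seq rat :=
  match n with
  | 0 => [:: 1]
  | n'.+1 =>
      let s := bern_seq n' in
      rcons s (- (n'.+2%:R)^-1 * \sum_(k < n'.+1) ('C(n'.+2, k))%:R * s`_k)
  end.

Definition bernoulli (n : nat) : rat := (bern_seq n)`_n.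

(* B_n(x) = sum_k C(n,k) B_k x^(n-k): coefficient of z^n/n! in
   (z/(e^z-1)) * e^(xz). *)
Definition bernpoly (n : nat) (x : rat) : rat :=
  \sum_(k < n.+1) ('C(n, k))%:R * bernoulli k * x ^+ (n - k).

Definition Btilde (D n : nat) (x : rat) : rat :=
  (D%:R) ^+ n * (bernpoly n x - bernoulli n).

Definition bentry (D a : nat) (c : nat * nat) : rat :=
  Btilde D (a + c.1) (c.2%:R / D%:R) / (a + c.1)%:R.

Definition bdet (D n : nat) (rows : nat -> nat) (cols : seq (nat * nat)) : rat :=
  \det (\matrix_(i < n, j < n) bentry D (rows i) (nth (0%N, 0%N) cols j)).

Definition Nr (r D : nat) : nat := ((D - 1) * r) %/ 2.
Definition kfl (D : nat) : nat := (D - 1) %/ 2.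
Definition kcl (D : nat) : nat := ((D - 1) + 1) %/ 2.

Definition cols_all (r D : nat) : seq (nat * nat) :=
  flatten [seq [seq (m, v) | v <- iota 1 (D - 1)] | m <- iota 0 r].
Definition cols1 (r D : nat) : seq (nat * nat) :=
  flatten [seq [seq (m, v) | v <- iota 1 (if odd m then kcl D else kfl D)]
          | m <- iota 0 r].
Definition cols2 (r D : nat) : seq (nat * nat) :=
  flatten [seq [seq (m, v) | v <- iota 1 (if odd m then kfl D else kcl D)]
          | m <- iota 0 r].

(* alpha is 1-indexed: alpha_t = alpha t for 1 <= t <= r(D-1). *)
Definition Delta (r D : nat) (alpha : nat -> nat) : rat :=
  bdet D (r * (D - 1)) (fun i => alpha i.+1) (cols_all r D).
Definition Delta' (r D : nat) (alpha : nat -> nat) : rat :=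
  bdet D (Nr r D) (fun i => alpha i.+1) (cols1 r D).
Definition Delta'' (r D : nat) (alpha : nat -> nat) : rat :=
  bdet D (r * (D - 1) - Nr r D) (fun i => alpha (Nr r D + i).+1) (cols2 r D).

Definition admissible (r D : nat) (alpha : nat -> nat) : Prop :=
  [/\ (forall t, (1 <= t)%N -> (t < r * (D - 1))%N -> (alpha t < alpha t.+1)%N),
      (2 <= alpha 1)%N,
      (forall t, (1 <= t)%N -> (t <= Nr r D)%N -> odd (alpha t))
    & (forall t, (Nr r D < t)%N -> (t <= r * (D - 1))%N -> ~~ odd (alpha t))].

(* Main.v *)
Require Import Defs.
From mathcomp Require Import all_boot all_order all_algebra.
From mathcomp Require Import zify ring lra.
Set Implicit Arguments. Unset Strict Implicit. Unset Printing Implicit Defensive.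
Import Order.TTheory GRing.Theory Num.Theory.
Local Open Scope ring_scope.


Lemma size_bern_seq n : size (bern_seq n) = n.+1.
Proof. by elim: n => //= n IH; rewrite size_rcons IH. Qed.

Lemma nth_bern_seq n k : (k <= n)%N -> (bern_seq n)`_k = bernoulli k.
Proof.
elim: n k => [|n IH] k.
  by rewrite leqn0 => /eqP ->.
rewrite leq_eqVlt => /orP [/eqP -> //| Hk].
rewrite /= nth_rcons size_bern_seq Hk; exact: IH.
Qed.

Lemma bern_rec m : (1 <= m)%N ->
  \sum_(k < m.+1) ('C(m.+1, k))%:R * bernoulli k = 0.
Proof.
case: m => // n _.
have Hb : bernoulli n.+1 =
   - (n.+2%:R)^-1 * \sum_(k < n.+1) ('C(n.+2, k))%:R * bernoulli k.
  rewrite /bernoulli /= nth_rcons size_bern_seq ltnn eqxx.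
  congr (_ * _); apply: eq_bigr => k _; rewrite nth_bern_seq //.
  by rewrite -ltnS.
rewrite big_ord_recr /= binSn Hb mulrA mulrN mulfV ?mul1r.
  by rewrite mulN1r subrr.
by rewrite (eqr_nat rat n.+2 0).
Qed.


Definition bp (n : nat) : {poly rat} :=
  \sum_(k < n.+1) (('C(n, k))%:R * bernoulli k) *: 'X^(n - k).

Lemma horner_bp n x : (bp n).[x] = bernpoly n x.
Proof.
rewrite /bp horner_sum; apply: eq_bigr => k _.
by rewrite hornerZ hornerXn.
Qed.

Lemma bp_at0 n : (bp n).[0] = bernoulli n.
Proof.
rewrite horner_bp /bernpoly big_ord_recr /= subnn expr0 binn mul1r mulr1.
rewrite big1 ?add0r // => k _.
by rewrite expr0n subn_eq0 leqNgt ltn_ord /= mulr0.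
Qed.

Lemma bp_at1 n : (2 <= n)%N -> (bp n).[1] = (bp n).[0].
Proof.
case: n => // [] [] // m _.
rewrite bp_at0 horner_bp /bernpoly big_ord_recr /=.
have -> : \sum_(i < m.+2) ('C(m.+2, i))%:R * bernoulli i * 1 ^+ (m.+2 - i) = 0.
  rewrite -[RHS](bern_rec (m := m.+1)) //; apply: eq_bigr => k _.
  by rewrite expr1n mulr1.
by rewrite add0r binn mul1r expr1n mulr1.
Qed.

Lemma deriv_bp n : (bp n.+1)^`() = n.+1%:R *: bp n.
Proof.
rewrite /bp raddf_sum big_ord_recr /= subnn derivZ derivXn /= mulr0n scaler0 addr0.
rewrite scaler_sumr; apply: eq_bigr => k _.
rewrite derivZ derivXn subSn; last by rewrite -ltnS ltn_ord.
rewrite /= -scaler_nat scalerA scalerA; congr (_ *: _).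
have := mul_bin_down n.+1 k => /= H.
rewrite mulrA -natrM H -subSn; last by rewrite -ltnS ltn_ord.
by rewrite natrM; ring.
Qed.


Lemma deriv0_const (p : {poly rat}) : p^`() = 0 -> p = (p.[0])%:P.
Proof.
move=> H; apply/polyP => i; rewrite coefC; case: i => [|i] /=.
  by rewrite horner_coef0.
have := congr1 (fun q : {poly rat} => q`_i) H.
by rewrite coef_deriv coef0 => /eqP; rewrite mulrn_eq0 /= => /eqP.
Qed.

Lemma appell_uniq (P Q : nat -> {poly rat}) :
  P 0%N = Q 0%N ->
  (forall n, (P n.+1)^`() = n.+1%:R *: P n) ->
  (forall n, (Q n.+1)^`() = n.+1%:R *: Q n) ->
  (forall n, (2 <= n)%N -> (P n).[1] = (P n).[0]) ->
  (forall n, (2 <= n)%N -> (Q n).[1] = (Q n).[0]) ->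
  forall n, P n = Q n.
Proof.
move=> H0 HP HQ HP1 HQ1; elim=> // n IH.
set d1 := P n.+1 - Q n.+1.
have h1 : d1^`() = 0 by rewrite derivB HP HQ IH subrr.
have e1 := deriv0_const h1.
set c := d1.[0] in e1.
set d2 := P n.+2 - Q n.+2 - (n.+2%:R * c) *: 'X.
have h2 : d2^`() = 0.
  rewrite /d2 !derivB HP HQ derivZ derivX -scalerBr -/d1 e1.
  by rewrite scale_polyC alg_polyC subrr.
have e2 := deriv0_const h2.
have : d2.[1] = d2.[0] by rewrite e2 !hornerC.
rewrite /d2 !hornerE HP1 // HQ1 //. move=> E.
have /eqP : n.+2%:R * c = 0 by lra.
rewrite mulf_eq0 => /orP [|/eqP c0].
  by rewrite (eqr_nat rat n.+2 0).
by apply/eqP; rewrite -subr_eq0 -/d1 e1 c0.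
Qed.

Definition bq (n : nat) : {poly rat} := (-1) ^+ n *: (bp n \Po (1 - 'X)).

Lemma bp_eq_bq n : bp n = bq n.
Proof.
apply: appell_uniq => {n} [||| n Hn | n Hn].
- rewrite /bq /bp expr0 scale1r big_ord1 subnn bin0 expr0.
  rewrite /bernoulli /= mul1r scale1r comp_polyC //.
- exact: deriv_bp.
- move=> n; rewrite /bq derivZ deriv_comp deriv_bp derivB derivC derivX sub0r.
  rewrite comp_polyZ mulrN1 scalerN -scaleNr scalerA scalerA exprS.
  congr (_ *: _); ring.
- exact: bp_at1.
- by rewrite /bq !hornerZ !horner_comp !hornerE subrr bp_at1.
Qed.

Lemma bernpoly_sym n x : bernpoly n (1 - x) = (-1) ^+ n * bernpoly n x.
Proof.
by rewrite -!horner_bp {1}bp_eq_bq /bq hornerZ horner_comp !hornerE opprB addrC subrK.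
Qed.

Lemma bernoulli_odd n : (2 <= n)%N -> odd n -> bernoulli n = 0.
Proof.
move=> H2 Ho.
have := bernpoly_sym n 1.
rewrite subrr -!horner_bp bp_at1 // bp_at0 -signr_odd Ho expr1 mulN1r.
move/eqP; rewrite -subr_eq0 opprK -mulr2n mulrn_eq0 /= => /eqP //.
Qed.


Lemma Btilde_sym D n v : (0 < D)%N -> (v <= D)%N -> (2 <= n)%N ->
  Btilde D n ((D - v)%:R / D%:R) = (-1) ^+ n * Btilde D n (v%:R / D%:R).
Proof.
move=> D0 vD n2.
have D0' : D%:R != 0 :> rat by rewrite (eqr_nat rat D 0) -lt0n.
have -> : (D - v)%:R / D%:R = 1 - v%:R / D%:R :> rat.
  by rewrite natrB // mulrBl divff.
rewrite /Btilde bernpoly_sym.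
case Ho: (odd n).
  rewrite bernoulli_odd // -signr_odd Ho expr1; ring.
rewrite -signr_odd Ho expr0; ring.
Qed.

Lemma bentry_sym D a m w : (0 < D)%N -> (w <= D)%N -> (2 <= a + m)%N ->
  bentry D a (m, (D - w)%N) = (-1) ^+ (a + m) * bentry D a (m, w).
Proof.
move=> H1 H2 H3; rewrite /bentry /= Btilde_sym //; symmetry; exact: mulrA.
Qed.

Lemma bentry_mid D a m w : (0 < D)%N -> (w + w = D)%N -> (2 <= a + m)%N ->
  odd (a + m) -> bentry D a (m, w) = 0.
Proof.
move=> D0 ww am od.
have := bentry_sym D0 (_ : (w <= D)%N) am.
have -> : (D - w = w)%N by lia.
rewrite -signr_odd od expr1 mulN1r => /(_ ltac:(lia)) /eqP.
by rewrite -subr_eq0 opprK -mulr2n mulrn_eq0 /= => /eqP.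
Qed.

Definition colsf (r : nat) (f : nat -> nat) : seq (nat * nat) :=
  flatten [seq [seq (m, v) | v <- iota 1 (f m)] | m <- iota 0 r].

Lemma mem_colsf r f x :
  (x \in colsf r f) = [&& (x.1 < r)%N, (1 <= x.2)%N & (x.2 <= f x.1)%N].
Proof.
apply/idP/idP.
  move/allpairsPdep => [m [v [Hm Hv ->]]] /=.
  move: Hm Hv; rewrite !mem_iota; lia.
case: x => m v /= H; apply/allpairsPdep; exists m, v; split => //;
  rewrite mem_iota; lia.
Qed.

Lemma uniq_colsf r f : uniq (colsf r f).
Proof.
apply: allpairs_uniq_dep; first exact: iota_uniq.
  by move=> m _; exact: iota_uniq.
by move=> [m1 v1] [m2 v2] _ _ /= [-> ->].
Qed.

Lemma size_colsf r f : size (colsf r f) = \sum_(m < r) f m.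
Proof.
rewrite /colsf size_flatten /shape -map_comp.
elim: r => [|r IH]; first by rewrite big_ord0.
rewrite -[r.+1]addn1 iotaD map_cat sumn_cat IH addn1 big_ord_recr /= add0n addn0.
by rewrite size_map size_iota.
Qed.

Definition bnd (D : nat) (p : bool) (m : nat) : nat :=
  if p then (if odd m then kcl D else kfl D) else (if odd m then kfl D else kcl D).

Lemma cols1E r D : cols1 r D = colsf r (bnd D true).
Proof. by []. Qed.
Lemma cols2E r D : cols2 r D = colsf r (bnd D false).
Proof. by []. Qed.
Lemma cols_allE r D : cols_all r D = colsf r (fun _ => (D - 1)%N).
Proof. by []. Qed.

Lemma sum_bnd_true r D : (\sum_(m < r) bnd D true m)%N = Nr r D.
Proof.
rewrite /Nr; elim: r => [|r IH]; first by rewrite big_ord0 muln0 div0n.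
rewrite big_ord_recr /= IH /bnd /kcl /kfl.
have := odd_double_half r.
case: (odd r) => /= H; lia.
Qed.

Lemma sum_bnd_false r D : (\sum_(m < r) bnd D false m)%N = (r * (D - 1) - Nr r D)%N.
Proof.
have : (\sum_(m < r) bnd D false m + \sum_(m < r) bnd D true m)%N = (r * (D - 1))%N.
  rewrite -big_split /=.
  have -> : (\sum_(i < r) (bnd D false i + bnd D true i))%N = \sum_(i < r) (D - 1)%N.
    by apply: eq_bigr => i _; rewrite /bnd /kcl /kfl; case: (odd i); lia.
  by rewrite sum_nat_const card_ord.
rewrite sum_bnd_true; lia.
Qed.


Definition wv (D v : nat) : nat := if (v + v <= D)%N then v else (D - v)%N.
Definition sg (D : nat) (p : bool) (m v : nat) : rat :=
  if (v + v <= D)%N then 1 else (-1) ^+ (p + m)%N.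

Lemma bentry_rowid r D p a m v : (3 <= D)%N -> (2 <= a)%N -> odd a = p ->
  (m < r)%N -> (1 <= v)%N -> (v <= D - 1)%N ->
  bentry D a (m, v) =
  if (m, wv D v) \in colsf r (bnd D p) then bentry D a (m, wv D v) * sg D p m v
  else 0.
Proof.
move=> D3 a2 Ha Hm Hv1 HvD.
rewrite mem_colsf /= /wv /sg; case: (leqP (v + v) D) => Hv /=.
  rewrite mulr1; case: ifP => // Hin.
  have Hb : (bnd D p m < v)%N.
    rewrite ltnNge; apply/negP => H; move: Hin; by rewrite Hm Hv1 H.
  apply: bentry_mid; [lia | | lia |].
    move: Hb; rewrite /bnd /kcl /kfl.
    by clear Hin; case: p Ha; case: (odd m); lia.
  clear Hin; move: Hb; rewrite /bnd /kcl /kfl oddD Ha.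
  by case: p Ha; case: (odd m) => //=; lia.
have -> : [&& (m < r)%N, (1 <= D - v)%N & (D - v <= bnd D p m)%N].
  rewrite Hm /=; apply/andP; split; first lia.
  by rewrite /bnd /kcl /kfl; case: p Ha; case: (odd m); lia.
have {1}-> : v = (D - (D - v))%N by lia.
rewrite bentry_sym; [|lia|lia|lia].
rewrite mulrC; congr (_ * _).
by rewrite -signr_odd oddD Ha -[RHS]signr_odd oddD oddb.
Qed.

Lemma sum_sel n (s : seq (nat * nat)) (G : 'I_n -> rat) c (k0 : 'I_n) y :
  size s = n -> uniq s -> nth (0%N, 0%N) s k0 = y ->
  \sum_(k < n) G k * ((nth (0%N, 0%N) s k == y)%:R * c) = G k0 * c.
Proof.
move=> Hs Hu <-; rewrite (bigD1 k0) //= eqxx mul1r big1 ?addr0 // => k Hk.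
rewrite nth_uniq ?Hs ?ltn_ord //.
by move: Hk => /negbTE; rewrite -(inj_eq val_inj) /= => ->; rewrite mul0r mulr0.
Qed.

Lemma sum_sel0 n (s : seq (nat * nat)) (G : 'I_n -> rat) c y :
  size s = n -> y \notin s ->
  \sum_(k < n) G k * ((nth (0%N, 0%N) s k == y)%:R * c) = 0.
Proof.
move=> Hs Hy; rewrite big1 // => k _.
case: eqP => [E|]; last by rewrite mul0r mulr0.
by move: Hy; rewrite -E mem_nth // Hs ltn_ord.
Qed.

Lemma sum_selF n (s : seq (nat * nat)) (F : nat * nat -> rat) c y :
  size s = n -> uniq s ->
  \sum_(k < n) F (nth (0%N, 0%N) s k) * ((nth (0%N, 0%N) s k == y)%:R * c) =
  if y \in s then F y * c else 0.
Proof.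
move=> Hs Hu; case: ifP => Hy; last first.
  by apply: (@sum_sel0 n s (fun k : 'I_n => F (nth (0%N, 0%N) s k)) c y) => //; rewrite Hy.
have Hi : (index y s < n)%N by rewrite -Hs index_mem.
rewrite (@sum_sel n s (fun k : 'I_n => F (nth (0%N, 0%N) s k)) c (Ordinal Hi)) //=;
  by rewrite nth_index.
Qed.


Definition Smat (r D : nat) (p : bool) (n N : nat) : 'M[rat]_(n, N) :=
  \matrix_(k < n, j < N)
    ((nth (0%N, 0%N) (colsf r (bnd D p)) k ==
      ((nth (0%N, 0%N) (cols_all r D) j).1, wv D (nth (0%N, 0%N) (cols_all r D) j).2))%:R
     * sg D p (nth (0%N, 0%N) (cols_all r D) j).1 (nth (0%N, 0%N) (cols_all r D) j).2).

Lemma entry_eq r D p n N (rows : nat -> nat) (i j : nat) (Hj : (j < N)%N) :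
  (3 <= D)%N -> size (colsf r (bnd D p)) = n -> size (cols_all r D) = N ->
  (2 <= rows i)%N -> odd (rows i) = p ->
  bentry D (rows i) (nth (0%N, 0%N) (cols_all r D) j) =
  \sum_(k < n) bentry D (rows i) (nth (0%N, 0%N) (colsf r (bnd D p)) k) *
      Smat r D p n N k (Ordinal Hj).
Proof.
move=> D3 Hs HN Hr Ho.
under eq_bigr do rewrite mxE /=.
rewrite sum_selF //; last exact: uniq_colsf.
have : nth (0%N, 0%N) (cols_all r D) j \in cols_all r D by rewrite mem_nth // HN.
case: (nth _ _ j) => m v Hin.
have /and3P [Hm Hv1 HvD] : [&& (m < r)%N, (1 <= v)%N & (v <= D - 1)%N].
  by move: Hin; rewrite cols_allE mem_colsf.
rewrite (bentry_rowid (r := r) (p := p)) //.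
Qed.

Lemma main_eq r D n1 n2 (rows : nat -> nat) :
  (3 <= D)%N -> size (colsf r (bnd D true)) = n1 ->
  size (colsf r (bnd D false)) = n2 -> size (cols_all r D) = (n1 + n2)%N ->
  (forall i, (i < n1)%N -> odd (rows i)) ->
  (forall i, (i < n2)%N -> ~~ odd (rows (n1 + i)%N)) ->
  (forall i, (i < n1 + n2)%N -> (2 <= rows i)%N) ->
  bdet D (n1 + n2) rows (cols_all r D) =
  \det (col_mx (Smat r D true n1 (n1 + n2)) (Smat r D false n2 (n1 + n2))) *
  bdet D n1 rows (cols1 r D) * bdet D n2 (fun i => rows (n1 + i)%N) (cols2 r D).
Proof.
move=> D3 Hs1 Hs2 HN Ho1 Ho2 H2.
rewrite /bdet.
set A1 := \matrix_(i < n1, j < n1) _.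
set A2 := \matrix_(i < n2, j < n2) _.
set M := \matrix_(i < n1 + n2, j < n1 + n2) _.
have E : M = block_mx A1 0 0 A2 *m
              col_mx (Smat r D true n1 (n1 + n2)) (Smat r D false n2 (n1 + n2)).
  rewrite mul_block_col !mul0mx addr0 add0r -[LHS]vsubmxK.
  congr col_mx; apply/matrixP => i j; rewrite !mxE.
    under eq_bigr do rewrite mxE.
    rewrite (@entry_eq r D true n1 (n1 + n2) rows i j (ltn_ord j)) //=.
    - by apply: eq_bigr => k _; congr (_ * Smat _ _ _ _ _ _ _); apply: val_inj.
    - apply: H2; rewrite /= ltn_addr //.
    - exact: Ho1.
  under eq_bigr do rewrite mxE.
  rewrite (@entry_eq r D false n2 (n1 + n2) rows (n1 + i) j (ltn_ord j)) //=.
  - by apply: eq_bigr => k _; congr (_ * Smat _ _ _ _ _ _ _); apply: val_inj.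
  - apply: H2; rewrite /= ltn_add2l //.
  - by apply/negbTE/Ho2.
rewrite E det_mulmx det_ublock; ring.
Qed.


Lemma aux1 D w : (w + w < D)%N -> ((D - w) + (D - w) <= D)%N = false.
Proof. move=> H; apply/negbTE; rewrite -ltnNge; lia. Qed.

Lemma sign_neg (p : bool) m : (-1) ^+ (~~ p + m)%N = - (-1) ^+ (p + m)%N :> rat.
Proof. by case: p => /=; rewrite ?add0n ?add1n exprS ?mulN1r ?opprK. Qed.

Lemma ker_key r D p n n' N (u : 'rV[rat]_n) (u' : 'rV[rat]_n') :
  (3 <= D)%N -> size (colsf r (bnd D p)) = n ->
  size (colsf r (bnd D (~~ p))) = n' -> size (cols_all r D) = N ->
  u *m Smat r D p n N + u' *m Smat r D (~~ p) n' N = 0 -> u = 0.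
Proof.
move=> D3 Hs Hs' HN H.
have Hcol : forall x, x \in cols_all r D ->
  \sum_(k < n) u 0 k * ((nth (0%N, 0%N) (colsf r (bnd D p)) k == (x.1, wv D x.2))%:R
       * sg D p x.1 x.2) +
  \sum_(k < n') u' 0 k * ((nth (0%N, 0%N) (colsf r (bnd D (~~ p))) k == (x.1, wv D x.2))%:R
       * sg D (~~ p) x.1 x.2) = 0.
  move=> x Hx.
  have Hi : (index x (cols_all r D) < N)%N by rewrite -HN index_mem.
  have := congr1 (fun M : 'rV_N => M 0 (Ordinal Hi)) H.
  rewrite !mxE => E; rewrite -[RHS]E.
  by congr (_ + _); apply: eq_bigr => k _; rewrite mxE /= nth_index.
apply/rowP => k; rewrite mxE.
have : nth (0%N, 0%N) (colsf r (bnd D p)) k \in colsf r (bnd D p).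
  by rewrite mem_nth // Hs.
case Ey: (nth _ _ k) => [m w] Hin.
have /and3P [Hm Hw1 Hwb] : [&& (m < r)%N, (1 <= w)%N & (w <= bnd D p m)%N].
  by move: Hin; rewrite mem_colsf.
have Hww : (w + w <= D)%N.
  by move: Hwb; rewrite /bnd /kcl /kfl; case: (p); case: (odd m); lia.
have Hx0 : (m, w) \in cols_all r D.
  rewrite cols_allE mem_colsf /= Hm Hw1 /=; lia.
have E0 := Hcol _ Hx0; rewrite /= /wv /sg Hww in E0.
rewrite (@sum_sel n _ (fun k => u 0 k) 1 k) // in E0; last exact: uniq_colsf.
case Hq: ((m, w) \in colsf r (bnd D (~~ p))); last first.
  rewrite (@sum_sel0 n' _ (fun k => u' 0 k)) ?Hq // in E0.
  by move: E0; rewrite mulr1 addr0.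
have Hi1 : (index (m, w) (colsf r (bnd D (~~ p))) < n')%N by rewrite -Hs' index_mem.
rewrite (@sum_sel n' _ (fun k => u' 0 k) 1 (Ordinal Hi1)) /= ?nth_index // in E0;
  last exact: uniq_colsf.
have /and3P [_ _ Hwb'] : [&& (m < r)%N, (1 <= w)%N & (w <= bnd D (~~ p) m)%N].
  by move: Hq; rewrite mem_colsf.
have Hww' : (w + w < D)%N.
  move: Hwb Hwb'; rewrite /bnd /kcl /kfl; case: (p); case: (odd m) => /=; lia.
have Hx1 : (m, (D - w)%N) \in cols_all r D.
  rewrite cols_allE mem_colsf /= Hm /=; lia.
have E1 := Hcol _ Hx1; rewrite /= /wv /sg in E1.
move: E1; rewrite (aux1 Hww') subKn; last by apply: leq_trans Hww; apply: leq_addl.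
have S1 := (@sum_sel n _ (fun k => u 0 k) ((-1) ^+ (p + m)) k (m, w) Hs (uniq_colsf _ _) Ey).
have Hn1 : nth (0%N, 0%N) (colsf r (bnd D (~~ p))) (Ordinal Hi1) = (m, w) by rewrite /= nth_index.
have S2 := (@sum_sel n' _ (fun k => u' 0 k) ((-1) ^+ (~~ p + m)) (Ordinal Hi1) (m, w) Hs' (uniq_colsf _ _) Hn1).
rewrite S1 S2 sign_neg in E0 *; rewrite !mulr1 in E0.
move=> E1.
have : (u 0 k - u' 0 (Ordinal Hi1)) * (-1) ^+ (p + m)%N = 0.
  by rewrite mulrBl; rewrite mulrN in E1.
move/eqP; rewrite mulf_eq0 signr_eq0 orbF subr_eq0 => /eqP Eab.
move: E0; rewrite Eab -mulr2n => /eqP; rewrite mulrn_eq0 /=; exact: eqP.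
Qed.

Lemma Sdet_neq0 r D n1 n2 :
  (3 <= D)%N -> size (colsf r (bnd D true)) = n1 ->
  size (colsf r (bnd D false)) = n2 -> size (cols_all r D) = (n1 + n2)%N ->
  \det (col_mx (Smat r D true n1 (n1 + n2)) (Smat r D false n2 (n1 + n2))) != 0.
Proof.
move=> D3 Hs1 Hs2 HN; apply/det0P => [[v Hv0]].
rewrite -[v]hsubmxK mul_row_col => H.
have H1 := ker_key (p := true) D3 Hs1 Hs2 HN H.
have H2 : rsubmx v = 0.
  apply: (ker_key (p := false) D3 Hs2 Hs1 HN); rewrite addrC; exact: H.
by move: Hv0; rewrite -[v]hsubmxK H1 H2 row_mx0 eqxx.
Qed.


Lemma alpha_ge (n : nat) (alpha : nat -> nat) :
  (forall t, (1 <= t)%N -> (t < n)%N -> (alpha t < alpha t.+1)%N) ->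
  forall t, (1 <= t)%N -> (t <= n)%N -> (alpha 1 <= alpha t)%N.
Proof.
move=> Hinc; elim=> // t IH _ Ht.
case: t IH Ht => [|t] IH Ht //.
apply: leq_trans (IH isT (ltnW Ht)) _.
apply: ltnW; apply: Hinc => //.
Qed.

Unset Implicit Arguments.

Theorem proposition3p4 (r D : nat) :
  (1 <= r)%N -> (3 <= D)%N ->
  exists C : rat, C != 0 /\
    (forall alpha : nat -> nat, admissible r D alpha ->
       Delta r D alpha = C * Delta' r D alpha * Delta'' r D alpha) /\
    (forall alpha : nat -> nat, admissible r D alpha ->
       Delta' r D alpha != 0 -> Delta'' r D alpha != 0 -> Delta r D alpha != 0).
Proof.
move=> r1 D3.
have Hs1 : size (colsf r (bnd D true)) = Nr r D by rewrite size_colsf sum_bnd_true.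
have Hs2 : size (colsf r (bnd D false)) = (r * (D - 1) - Nr r D)%N
  by rewrite size_colsf sum_bnd_false.
have Hle : (Nr r D <= r * (D - 1))%N by rewrite /Nr mulnC leq_div.
have En : (r * (D - 1))%N = (Nr r D + (r * (D - 1) - Nr r D))%N by lia.
have HN : size (cols_all r D) = (Nr r D + (r * (D - 1) - Nr r D))%N.
  by rewrite -En cols_allE size_colsf sum_nat_const card_ord.
have eqn : forall alpha : nat -> nat, admissible r D alpha ->
   Delta r D alpha =
   \det (col_mx (Smat r D true (Nr r D) (Nr r D + (r * (D - 1) - Nr r D)))
                (Smat r D false (r * (D - 1) - Nr r D) (Nr r D + (r * (D - 1) - Nr r D))))
   * Delta' r D alpha * Delta'' r D alpha.
  move=> alpha [Hinc H1 Hodd Hev].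
  rewrite /Delta /Delta' /Delta'' {1}En.
  apply: (@main_eq r D (Nr r D) (r * (D - 1) - Nr r D) (fun i => alpha i.+1)) => //.
  - move=> i Hi; apply: Hodd; lia.
  - move=> i Hi; apply: Hev; lia.
  - move=> i Hi; apply: leq_trans H1 _; apply: (alpha_ge Hinc); lia.
exists (\det (col_mx (Smat r D true (Nr r D) (Nr r D + (r * (D - 1) - Nr r D)))
                (Smat r D false (r * (D - 1) - Nr r D) (Nr r D + (r * (D - 1) - Nr r D))))).
split; first exact: Sdet_neq0.
split; first exact: eqn.
move=> alpha Ha H1 H2; rewrite (eqn _ Ha) !mulf_neq0 //.
exact: Sdet_neq0.
Qed.
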